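(* Let $h>0$ satisfy $L_eh^2\le1/9$, where $L_e=L+2\epsilon\tilde L$. Then for all $(x,v),(y,u)\in\mathbb{R}^{Nd}\times\mathbb{R}^{Nd}$, $$\sum_{\ell=1}^N\sup_{0\le s\le h}\big|\!\big|\!\big|(q^\ell_s(x,v),p^\ell_s(x,v))-(q^\ell_s(y,u),p^\ell_s(y,u))\big|\!\big|\!\big|^2\le(1+7L_e^{1/2}h)\sum_{\ell=1}^N\big|\!\big|\!\big|(x^\ell-y^\ell,v^\ell-u^\ell)\big|\!\big|\!\big|^2.$$
   Context: Standing assumptions: $\epsilon\ge0$; $V:\mathbb{R}^d\to\mathbb{R}$, $W:\mathbb{R}^d\times\mathbb{R}^d\to\mathbb{R}$ are $C^1$, $\nabla_1W$ the gradient in the first argument, constants $L>0$, $\tilde L\ge0$ with: (a) $V(0)=0$, $V\ge0$; (b) $|\nabla V(x)-\nabla V(y)|\le L|x-y|$; (d) $W$ symmetric, $|\nabla_1W(x,y)-\nabla_1W(\tilde x,\tilde y)|\le\tilde L(|x-\tilde x|+|y-\tilde y|)$. Points of $\mathbb{R}^{Nd}$: $x=(x^1,\dots,x^N)$. $U(x)=\sum_i\big(V(x^i)+\frac\epsilon{2N}\sum_jW(x^i,x^j)\big)$, $\nabla_iU=\partial U/\partial x^i$. Exact flow $(q_t,p_t)(x,v)$: $\dot q^i_t=p^i_t$, $\dot p^i_t=-\nabla_iU(q_t)$, $(q_0,p_0)=(x,v)$. For $(a,b)\in\mathbb{R}^{2d}$, $|\!|\!|(a,b)|\!|\!|^2=|a|^2+L_e^{-1}|b|^2$.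 *)

(* Defs.v *)
From HB Require Import structures.
From mathcomp Require Import all_boot all_order all_algebra.
From mathcomp Require Import all_classical all_reals all_analysis.
Set Implicit Arguments. Unset Strict Implicit. Unset Printing Implicit Defensive.
Import Order.TTheory GRing.Theory Num.Theory.
Import numFieldNormedType.Exports.
Local Open Scope classical_set_scope.
Local Open Scope ring_scope.

(* Points of R^d are row vectors 'rV[R]_d; points of R^{Nd} are N x d
   matrices whose i-th row is the i-th particle x^i. *)

Definition sqnorm {R : realType} {d : nat} (a : 'rV[R]_d) : R :=
  \sum_(k < d) (a 0 k) ^+ 2.
Definition enorm {R : realType} {d : nat} (a : 'rV[R]_d) : R :=
  Num.sqrt (sqnorm a).

Definition grad {R : realType} {d : nat} (f : 'rV[R]_d -> R) (x : 'rV[R]_d)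
  : 'rV[R]_d := \row_(k < d) ('D_(delta_mx 0 k) f x).

Definition grad1 {R : realType} {d : nat} (W : 'rV[R]_d -> 'rV[R]_d -> R)
  (x y : 'rV[R]_d) : 'rV[R]_d := grad (fun z => W z y) x.

Definition Upot {R : realType} {N d : nat} (eps : R) (V : 'rV[R]_d -> R)
  (W : 'rV[R]_d -> 'rV[R]_d -> R) (x : 'M[R]_(N, d)) : R :=
  \sum_(i < N) (V (row i x) +
     eps / (2 * N%:R) * \sum_(j < N) W (row i x) (row j x)).

Definition gradU {R : realType} {N d : nat} (U : 'M[R]_(N, d) -> R)
  (x : 'M[R]_(N, d)) : 'M[R]_(N, d) :=
  \matrix_(i < N, k < d) ('D_(delta_mx i k) U x).

Definition tnorm2 {R : realType} {d : nat} (Le : R) (a b : 'rV[R]_d) : R :=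
  sqnorm a + Le^-1 * sqnorm b.

Definition is_flow {R : realType} {N d : nat} (U : 'M[R]_(N, d) -> R)
  (x v : 'M[R]_(N, d)) (q p : R -> 'M[R]_(N, d)) : Prop :=
  q 0 = x /\ p 0 = v /\
  (forall t : R, is_derive t 1 q (p t)) /\
  (forall t : R, is_derive t 1 p (- gradU U (q t))).

(* Main.v *)
Require Import Defs.
From HB Require Import structures.
From mathcomp Require Import all_boot all_order all_algebra.
From mathcomp Require Import all_classical all_reals all_analysis.
From mathcomp Require Import ring lra.
Import Order.TTheory GRing.Theory Num.Theory.
Import numFieldNormedType.Exports.
Local Open Scope classical_set_scope.
Local Open Scope ring_scope.

Section CS.
Context {R : realType}.

Lemma cauchy_schwarz n (a b : 'I_n -> R) :
  (\sum_(i < n) a i * b i) ^+ 2 <=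
  (\sum_(i < n) a i ^+ 2) * (\sum_(i < n) b i ^+ 2).
Proof.
set A := \sum_(i < n) a i ^+ 2; set B := \sum_(i < n) a i * b i;
set C := \sum_(i < n) b i ^+ 2.
have A0 : 0 <= A by apply: sumr_ge0 => i _; exact: sqr_ge0.
have E : \sum_(i < n) (A * b i - B * a i) ^+ 2 = A * (A * C - B ^+ 2).
  transitivity (\sum_(i < n) (A ^+ 2 * b i ^+ 2) - \sum_(i < n) (2 * A * B * (a i * b i))
                + \sum_(i < n) (B ^+ 2 * a i ^+ 2)).
    by rewrite -sumrB -big_split; apply: eq_bigr => i _ /=; ring.
  by rewrite -!mulr_sumr -/A -/B -/C; ring.
have P : 0 <= A * (A * C - B ^+ 2).
  by rewrite -E; apply: sumr_ge0 => i _; exact: sqr_ge0.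
have [A00|Apos] := eqVneq A 0.
  have a0 : forall i, a i = 0.
    move=> i; have := psumr_eq0P (fun i _ => sqr_ge0 (a i)).
    by move=> /(_ xpredT A00 i isT) /eqP; rewrite sqrf_eq0 => /eqP.
  rewrite /B big1 ?expr0n ?A00 ?mul0r // => i _.
  by rewrite a0 mul0r.
have Ag : 0 < A by rewrite lt_neqAle eq_sym Apos A0.
by rewrite -subr_ge0; move: P; rewrite pmulr_rge0.
Qed.

Definition dotv {d : nat} (a b : 'rV[R]_d) : R := \sum_(k < d) a 0 k * b 0 k.

Lemma sqnorm_ge0 {d : nat} (a : 'rV[R]_d) : 0 <= sqnorm a.
Proof. by apply: sumr_ge0 => i _; exact: sqr_ge0. Qed.

Lemma enorm_ge0 {d : nat} (a : 'rV[R]_d) : 0 <= enorm a.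
Proof. exact: sqrtr_ge0. Qed.

Lemma enorm_sq {d : nat} (a : 'rV[R]_d) : enorm a ^+ 2 = sqnorm a.
Proof. by rewrite sqr_sqrtr // sqnorm_ge0. Qed.

Lemma dot_absle {d : nat} (a b : 'rV[R]_d) : `|dotv a b| <= enorm a * enorm b.
Proof.
have h := @cauchy_schwarz d (fun k => a 0 k) (fun k => b 0 k).
rewrite -(ger0_norm (mulr_ge0 (enorm_ge0 a) (enorm_ge0 b))).
rewrite -ler_sqr ?nnegrE // !real_normK ?num_real // exprMn !enorm_sq; exact: h.
Qed.

Lemma dot_le {d : nat} (a b : 'rV[R]_d) : dotv a b <= enorm a * enorm b.
Proof. exact: le_trans (ler_norm _) (dot_absle a b). Qed.

Lemma enorm_triangle {d : nat} (a b : 'rV[R]_d) : enorm (a + b) <= enorm a + enorm b.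
Proof.
rewrite -ler_sqr ?nnegrE ?addr_ge0 ?enorm_ge0 // enorm_sq.
have -> : sqnorm (a + b) = sqnorm a + sqnorm b + 2 * dotv a b.
  rewrite /sqnorm /dotv mulr_sumr -!big_split; apply: eq_bigr => k _ /=.
  rewrite !mxE; ring.
rewrite sqrrD !enorm_sq; have := dot_le a b; lra.

Qed.

Lemma enormZ {d : nat} c (a : 'rV[R]_d) : enorm (c *: a) = `|c| * enorm a.
Proof.
rewrite /enorm -sqrtr_sqr -sqrtrM ?sqr_ge0 //; congr Num.sqrt.
rewrite /sqnorm mulr_sumr; apply: eq_bigr => k _; rewrite mxE; ring.
Qed.

Lemma enormN {d : nat} (a : 'rV[R]_d) : enorm (- a) = enorm a.
Proof. by rewrite -scaleN1r enormZ normrN normr1 mul1r. Qed.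

Lemma enorm_sum {d : nat} n (F : 'I_n -> 'rV[R]_d) :
  enorm (\sum_(i < n) F i) <= \sum_(i < n) enorm (F i).
Proof.
elim/big_ind2 : _ => //.
  by rewrite /enorm /sqnorm big1 ?sqrtr0 // => k _; rewrite mxE expr0n.
by move=> x1 x2 y1 y2 h1 h2; apply: le_trans (enorm_triangle _ _) (lerD h1 h2).
Qed.

End CS.
Lemma is_derive_coord (R : realType) m n (f : R -> 'M[R]_(m, n)) (t : R) (f' : 'M[R]_(m, n)) (i : 'I_m) (j : 'I_n) :
  is_derive t 1 f f' -> is_derive t 1 (fun s => f s i j) (f' i j).
Proof.
move=> [df df'].
have H : (fun h : R => h^-1 *: ((f \o shift t) (h *: 1) - f t)) @ 0^' --> f'.
  by rewrite -df'; exact: df.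
have H2 := continuous_cvg _ (@coord_continuous R m n i j f') H.
have E : (fun h : R => h^-1 *: (((fun s => f s i j) \o shift t) (h *: 1) - f t i j)) =
   ((fun M : 'M[R]_(m, n) => M i j) \o (fun h : R => h^-1 *: ((f \o shift t) (h *: 1) - f t))).
  by apply/funext => h /=; rewrite !mxE.
have D : derivable (fun s => f s i j) t 1.
  by rewrite /derivable E; apply/cvg_ex; eexists; exact: H2.
apply: DeriveDef => //.
rewrite /derive E; apply: cvg_lim; [exact: norm_hausdorff | exact: H2].
Qed.
Lemma is_derive_affine (R : realType) (U V W : normedModType R) (f : V -> W) (A : U -> V)
  (x v : U) (v' : V) (df : W) :
  (forall h : R, A (h *: v + x) = h *: v' + A x) ->
  is_derive (A x) v' f df -> is_derive x v (f \o A) df.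
Proof.
move=> hA [d1 d2].
have E : (fun h : R => h^-1 *: (((f \o A) \o shift x) (h *: v) - (f \o A) x)) =
         (fun h : R => h^-1 *: ((f \o shift (A x)) (h *: v') - f (A x))).
  by apply/funext => h /=; rewrite hA.
split; first by rewrite /derivable E.
by rewrite /derive E.
Qed.

Lemma is_derive_diff (R : realType) (U V : normedModType R) (f : U -> V) x v :
  differentiable f x -> is_derive x v f ('d f x v).
Proof.
move=> df; split; first exact: diff_derivable.
by rewrite deriveE.
Qed.

Section G.
Context {R : realType} {N d : nat} (eps : R) (V : 'rV[R]_d -> R)
  (W : 'rV[R]_d -> 'rV[R]_d -> R).
Let W' := fun w : 'rV[R]_d * 'rV[R]_d => W w.1 w.2.
Hypothesis dV : forall x, differentiable V x.
Hypothesis dW : forall z, differentiable W' z.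
Hypothesis sW : forall x y, W x y = W y x.

Lemma is_derive_Upot (x e : 'M[R]_(N, d)) :
  is_derive x e (Upot eps V W)
   (\sum_(i0 < N) ('d V (row i0 x) (row i0 e) + eps / (2 * N%:R) *
       \sum_(j < N) 'd W' (row i0 x, row j x) (row i0 e, row j e))).
Proof.
have -> : Upot eps V W = \sum_(i0 < N) ((V \o row i0) +
   (eps / (2 * N%:R)) \*: \sum_(j < N) (W' \o (fun x => (row i0 x, row j x)))).
  apply/funext => y; rewrite /Upot fct_sumE; apply: eq_bigr => i0 _.
  by rewrite /= fct_sumE.
apply: is_derive_sum => i0.
apply: is_deriveD.
  apply: (@is_derive_affine _ _ _ _ _ _ _ _ (row i0 e)); first by move=> h; rewrite linearD linearZ.
  exact: is_derive_diff.
apply: is_deriveZ; apply: is_derive_sum => j.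
apply: (@is_derive_affine _ _ _ _ _ _ _ _ ((row i0 e, row j e))).
  by move=> h; rewrite !linearD !linearZ.
exact: is_derive_diff.
Qed.
End G.

Section G2.
Context {R : realType} {N d : nat} (eps : R) (V : 'rV[R]_d -> R)
  (W : 'rV[R]_d -> 'rV[R]_d -> R).
Let W' := fun w : 'rV[R]_d * 'rV[R]_d => W w.1 w.2.
Hypothesis dV : forall x, differentiable V x.
Hypothesis dW : forall z, differentiable W' z.
Hypothesis sW : forall x y, W x y = W y x.

Lemma row_delta (i i0 : 'I_N) (k : 'I_d) :
  row i0 (delta_mx i k : 'M[R]_(N, d)) = if i0 == i then delta_mx 0 k else 0.
Proof.
apply/matrixP => a b; case: (i0 =P i) => [->|/eqP ne].
  by rewrite !mxE eqxx ord1 eqxx.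
by rewrite !mxE (negbTE ne).
Qed.

Lemma dW_first p q a : 'd W' (p, q) (a, 0) = 'D_a (fun y => W y q) p.
Proof.
have H : is_derive p a (W' \o (fun y => (y, q))) ('d W' (p, q) (a, 0)).
  apply: (@is_derive_affine _ _ _ _ _ _ _ _ (a, 0)); last exact: is_derive_diff.
  by move=> h /=; apply/pair_equal_spec; split => //=; rewrite scaler0 add0r.
by rewrite -(@derive_val _ _ _ _ _ _ _ H).
Qed.

Lemma dW_second p q b : 'd W' (p, q) (0, b) = 'D_b (fun y => W y p) q.
Proof.
have H : is_derive q b (W' \o (fun y => (p, y))) ('d W' (p, q) (0, b)).
  apply: (@is_derive_affine _ _ _ _ _ _ _ _ (0, b)); last exact: is_derive_diff.
  by move=> h /=; apply/pair_equal_spec; split => //=; rewrite scaler0 add0r.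
rewrite -(@derive_val _ _ _ _ _ _ _ H); congr derive.
by apply/funext => y; rewrite /W' /= sW.
Qed.

Lemma dW_split p q a b : 'd W' (p, q) (a, b) = 'd W' (p, q) (a, 0) + 'd W' (p, q) (0, b).
Proof.
rewrite -linearD; congr ('d W' _ _); apply/pair_equal_spec; split => /=; by rewrite ?addr0 ?add0r.
Qed.

Lemma gradU_formula (x : 'M[R]_(N, d)) i k :
  gradU (Upot eps V W) x i k = grad V (row i x) 0 k +
     eps / N%:R * \sum_(j < N) grad1 W (row i x) (row j x) 0 k.
Proof.
rewrite /gradU mxE (@derive_val _ _ _ _ _ _ _ (is_derive_Upot eps V W dV dW x (delta_mx i k))).
rewrite -/W'.
set g := fun j => grad1 W (row i x) (row j x) 0 k.
have E1 : forall i0, 'd V (row i0 x) (row i0 (delta_mx i k : 'M[R]_(N, d))) =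
    if i0 == i then grad V (row i x) 0 k else 0.
  move=> i0; rewrite row_delta; case: eqP => [->|_]; last by rewrite linear0.
  by rewrite mxE (deriveE _ (dV _)).
have E2 : forall i0 j, 'd W' (row i0 x, row j x)
     (row i0 (delta_mx i k : 'M[R]_(N, d)), row j (delta_mx i k : 'M[R]_(N, d))) =
    (if i0 == i then g j else 0) + (if j == i then g i0 else 0).
  move=> i0 j; rewrite dW_split !row_delta.
  case: (i0 =P i) => [->|_]; case: (j =P i) => [->|_];
    rewrite ?linear0 ?dW_first ?dW_second /g /grad1 /grad ?mxE //.
under eq_bigr => i0 _ do under eq_bigr => j _ do rewrite E2.
under eq_bigr => i0 _ do rewrite E1.
rewrite big_split /= -big_mkcond big_pred1_eq; congr (_ + _).
rewrite -mulr_sumr.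
rewrite (eq_bigr (fun i0 => (if i0 == i then \sum_(j < N) g j else 0) + g i0)); last first.
  move=> i0 _; rewrite big_split /=; congr (_ + _); last by rewrite -big_mkcond big_pred1_eq.
  by case: eqP => // _; rewrite big1.
rewrite big_split /= -big_mkcond big_pred1_eq /g -mulr2n -mulr_natr.
rewrite mul1r invfM; set S := \sum_(j < N) _; set n := N%:R^-1.
have h2 : (2 : R) != 0 by rewrite pnatr_eq0.
by field.
Qed.
End G2.
Lemma gradU_lip {R : realType} {N d : nat} (eps L Lt : R) (V : 'rV[R]_d -> R)
  (W : 'rV[R]_d -> 'rV[R]_d -> R) :
  0 <= eps -> 0 <= Lt ->
  (forall x, differentiable V x) ->
  (forall z : 'rV[R]_d * 'rV[R]_d,
      differentiable (fun w : 'rV[R]_d * 'rV[R]_d => W w.1 w.2) z) ->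
  (forall x y, W x y = W y x) ->
  (forall x y, enorm (grad V x - grad V y) <= L * enorm (x - y)) ->
  (forall x y xt yt, enorm (grad1 W x y - grad1 W xt yt)
                      <= Lt * (enorm (x - xt) + enorm (y - yt))) ->
  forall (x y : 'M[R]_(N, d)) (i : 'I_N),
  enorm (row i (gradU (Upot eps V W) x) - row i (gradU (Upot eps V W) y)) <=
  (L + eps * Lt) * enorm (row i x - row i y) +
  eps * Lt / N%:R * \sum_(j < N) enorm (row j x - row j y).
Proof.
move=> e0 Lt0 dV dW sW lV lW x y i.
have rowG : forall x : 'M[R]_(N, d), row i (gradU (Upot eps V W) x) =
    grad V (row i x) + (eps / N%:R) *: \sum_(j < N) grad1 W (row i x) (row j x).
  move=> z; apply/matrixP => a k; rewrite ord1 mxE gradU_formula //.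
  by rewrite !mxE summxE.
have N0 : (0 < N)%N by apply: leq_ltn_trans (ltn_ord i).
have NR : (N%:R : R) != 0 by rewrite pnatr_eq0 -lt0n.
rewrite !rowG.
set zi := enorm (row i x - row i y).
have -> : grad V (row i x) + eps / N%:R *: \sum_j grad1 W (row i x) (row j x) -
   (grad V (row i y) + eps / N%:R *: \sum_j grad1 W (row i y) (row j y)) =
   (grad V (row i x) - grad V (row i y)) + (eps / N%:R) *:
     \sum_(j < N) (grad1 W (row i x) (row j x) - grad1 W (row i y) (row j y)).
  by rewrite sumrB scalerBr; rewrite opprD addrACA.
apply: le_trans (enorm_triangle _ _) _.
rewrite enormZ ger0_norm ?divr_ge0 ?ler0n //.
have h1 := lV (row i x) (row i y).
have h2 : enorm (\sum_(j < N) (grad1 W (row i x) (row j x) - grad1 W (row i y) (row j y)))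
   <= Lt * (zi *+ N + \sum_(j < N) enorm (row j x - row j y)).
  apply: le_trans (enorm_sum _ _) _.
  apply: le_trans (ler_sum _ (fun j _ => lW _ _ _ _)) _.
  by rewrite -mulr_sumr big_split /= sumr_const card_ord.
have h3 : eps / N%:R * enorm (\sum_(j < N) (grad1 W (row i x) (row j x) - grad1 W (row i y) (row j y)))
   <= eps / N%:R * (Lt * (zi *+ N + \sum_(j < N) enorm (row j x - row j y))).
  by apply: ler_wpM2l => //; rewrite divr_ge0 ?ler0n.
apply: le_trans (lerD h1 h3) _.
rewrite -[zi *+ N]mulr_natr -/zi.
set S := \sum_(j < N) _.
have -> : eps / N%:R * (Lt * (zi * N%:R + S)) = eps * Lt * zi + eps * Lt / N%:R * S.
  by field.
lra.
Qed.
Section Der.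
Context {R : realType}.
Implicit Types (f g : R -> R) (t df dg c : R).

Lemma derB f g t df dg : is_derive t 1 f df -> is_derive t 1 g dg ->
  is_derive t 1 (fun s => f s - g s) (df - dg).
Proof. move=> h1 h2; exact: is_deriveB. Qed.

Lemma derD f g t df dg : is_derive t 1 f df -> is_derive t 1 g dg ->
  is_derive t 1 (fun s => f s + g s) (df + dg).
Proof. move=> h1 h2; exact: is_deriveD. Qed.

Lemma derN f t df : is_derive t 1 f df -> is_derive t 1 (fun s => - f s) (- df).
Proof. move=> h1; exact: is_deriveN. Qed.

Lemma derM f g t df dg : is_derive t 1 f df -> is_derive t 1 g dg ->
  is_derive t 1 (fun s => f s * g s) (f t * dg + g t * df).
Proof. move=> h1 h2; exact: is_deriveM. Qed.

Lemma derSq f t df : is_derive t 1 f df ->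
  is_derive t 1 (fun s => f s ^+ 2) (2 * f t * df).
Proof.
move=> h; have -> : (fun s => f s ^+ 2) = (fun s => f s * f s).
  by apply/funext => s; rewrite expr2.
apply: is_derive_eq; change (f t * df + f t * df = 2 * f t * df).
ring.
Qed.

Lemma derCM f t c df : is_derive t 1 f df -> is_derive t 1 (fun s => c * f s) (c * df).
Proof.
move=> h; have := is_deriveZ c h.
by rewrite /GRing.scale /=.
Qed.

Lemma derSum n (F : 'I_n -> R -> R) t (dF : 'I_n -> R) :
  (forall i, is_derive t 1 (F i) (dF i)) ->
  is_derive t 1 (fun s => \sum_(i < n) F i s) (\sum_(i < n) dF i).
Proof. move=> h; rewrite -fct_sumE; exact: is_derive_sum. Qed.

Lemma derScaleDir f t c df : is_derive t 1 f df -> is_derive t c f (c * df).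
Proof.
move=> h.
have dfd : differentiable f t by apply/derivable1_diffP; exact: ex_derive.
have := @is_derive_diff _ _ _ f t c dfd.
have -> : 'd f t c = c * df.
  rewrite -[c in LHS]mulr1 -[c * 1]/(c *: (1 : R)) linearZ /=.
  by rewrite -(deriveE _ dfd) derive_val.
by [].
Qed.

Lemma derExp t c : is_derive t 1 (fun s => expR (c * s)) (c * expR (c * t)).
Proof.
apply: (@is_derive_affine _ _ _ _ expR (fun s => c * s) t 1 c).
  move=> h /=; change (c * (h * 1 + t) = h * c + c * t); ring.
exact: derScaleDir.
Qed.

Lemma nonincr f (f' : R -> R) : (forall t, is_derive t 1 f (f' t)) ->
  (forall t, 0 < t -> f' t <= 0) -> forall s, 0 <= s -> f s <= f 0.
Proof.
move=> hd hn s s0.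
have dv : forall x, derivable f x 1 by move=> x; case: (hd x).
have dvv : forall x, 'D_1 f x = f' x by move=> x; case: (hd x).
apply: (@ler0_derive1_nincr _ f 0 s) => //.
- by move=> x; rewrite in_itv /= => /andP [x0 _]; rewrite derive1E dvv; exact: hn.
- by apply: derivable_within_continuous => x _; exact: dv.
Qed.

End Der.
Lemma key_ineq (R : realFieldType) (a A B Z Wn Dn m : R) :
  0 < a -> a ^+ 2 = A + B -> 0 <= B -> B <= A -> 0 <= Z -> 0 <= Wn -> 0 <= m ->
  Dn <= A * Z + B * m ->
  2 * Z * Wn + 2 * (a ^+ 2)^-1 * Wn * Dn <=
  2 * a * (Z ^+ 2 + (a ^+ 2)^-1 * Wn ^+ 2) + a / 2 * m ^+ 2.
Proof.
move=> a0 hL B0 BA Z0 W0 m0 hD.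
set u := Wn / a.
have hW : Wn = a * u by rewrite /u mulrC divfK // gt_eqF.
have u0 : 0 <= u by rewrite /u divr_ge0 // ltW.
have an : a != 0 by rewrite gt_eqF.
have E1 : 2 * Z * Wn + 2 * (a ^+ 2)^-1 * Wn * Dn = a^-1 * (2 * a ^+ 2 * Z * u + 2 * u * Dn).
  by rewrite hW; field.
have E2 : 2 * a * (Z ^+ 2 + (a ^+ 2)^-1 * Wn ^+ 2) + a / 2 * m ^+ 2 =
   a^-1 * (2 * a ^+ 2 * (Z ^+ 2 + u ^+ 2) + a ^+ 2 / 2 * m ^+ 2).
  by rewrite hW; field.
rewrite E1 E2 ler_pM2l ?invr_gt0 // hL.
have h1 : 2 * u * Dn <= 2 * u * (A * Z + B * m) by apply: ler_wpM2l => //; rewrite mulr_ge0.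
have h2 : 0 <= (2 * A + B) * (Z - u) ^+ 2 by rewrite mulr_ge0 ?sqr_ge0 //; lra.
have h3 : 0 <= B * (u - m) ^+ 2 by rewrite mulr_ge0 ?sqr_ge0.
have h4 : 0 <= (A - B) * m ^+ 2 by rewrite mulr_ge0 ?sqr_ge0 // subr_ge0.
have h5 : 0 <= B * Z ^+ 2 by rewrite mulr_ge0 ?sqr_ge0.
nra.
Qed.
Section Flow.
Context {R : realType} {N d : nat}.
Variables (Le A B : R) (G : 'M[R]_(N, d) -> 'M[R]_(N, d))
  (q1 p1 q2 p2 : R -> 'M[R]_(N, d)).
Hypothesis HLe : Le = A + B.
Hypothesis HB0 : 0 <= B.
Hypothesis HBA : B <= A.
Hypothesis HLe0 : 0 < Le.
Hypothesis Hq1 : forall t : R, is_derive t 1 q1 (p1 t).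
Hypothesis Hq2 : forall t : R, is_derive t 1 q2 (p2 t).
Hypothesis Hp1 : forall t : R, is_derive t 1 p1 (- G (q1 t)).
Hypothesis Hp2 : forall t : R, is_derive t 1 p2 (- G (q2 t)).
Hypothesis HG : forall x y i, enorm (row i (G x) - row i (G y)) <=
  A * enorm (row i x - row i y) + B / N%:R * \sum_(j < N) enorm (row j x - row j y).

Definition zz (l : 'I_N) (t : R) := row l (q1 t) - row l (q2 t).
Definition ww (l : 'I_N) (t : R) := row l (p1 t) - row l (p2 t).
Definition DD (l : 'I_N) (t : R) := row l (G (q1 t)) - row l (G (q2 t)).
Definition ee (l : 'I_N) (t : R) := tnorm2 Le (row l (q1 t) - row l (q2 t)) (row l (p1 t) - row l (p2 t)).
Definition EE (t : R) := \sum_(l < N) ee l t.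
Definition De (l : 'I_N) (t : R) := 2 * dotv (zz l t) (ww l t) - 2 * Le^-1 * dotv (ww l t) (DD l t).

Lemma ee_deriv (l : 'I_N) (t : R) : is_derive t 1 (ee l) (De l t).
Proof.
have -> : ee l = fun s => \sum_(k < d) (q1 s l k - q2 s l k) ^+ 2 +
     Le^-1 * \sum_(k < d) (p1 s l k - p2 s l k) ^+ 2.
  apply/funext => s; rewrite /ee /tnorm2 /sqnorm.
  by congr (_ + _ * _); apply: eq_bigr => k _; rewrite !mxE.
apply: is_derive_eq.
  apply: derD.
    apply: derSum => k; apply: derSq; apply: derB; apply: is_derive_coord; first [exact: Hq1|exact: Hq2].
  apply: derCM; apply: derSum => k; apply: derSq; apply: derB; apply: is_derive_coord; first [exact: Hp1|exact: Hp2].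
rewrite /De /dotv /zz /ww /DD !mulr_sumr -sumrB -big_split; apply: eq_bigr => k _ /=.
rewrite !mxE; ring.
Qed.

Lemma ee_ge0 (l : 'I_N) (t : R) : 0 <= ee l t.
Proof.
by rewrite /ee /tnorm2 addr_ge0 ?sqnorm_ge0 // mulr_ge0 ?sqnorm_ge0 // invr_ge0 ltW.
Qed.

Lemma De_bound (l : 'I_N) (t : R) :
  De l t <= 2 * Num.sqrt Le * ee l t + Num.sqrt Le / (2 * N%:R) * EE t.
Proof.
set a := Num.sqrt Le.
have a0 : 0 < a by rewrite sqrtr_gt0.
have a2 : a ^+ 2 = Le by rewrite sqr_sqrtr // ltW.
have N0 : (0 < N)%N by apply: leq_ltn_trans (ltn_ord l).
have NR : (0 : R) < N%:R by rewrite ltr0n.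
set Z := enorm (zz l t); set Wn := enorm (ww l t); set Dn := enorm (DD l t).
set S := \sum_(j < N) enorm (zz j t).
set m := S / N%:R.
have S0 : 0 <= S by apply: sumr_ge0 => j _; exact: enorm_ge0.
have m0 : 0 <= m by rewrite divr_ge0 // ltW.
have hD : Dn <= A * Z + B * m.
  by rewrite /m mulrA -[B * S / _]mulrAC; exact: HG.
have hdot1 : dotv (zz l t) (ww l t) <= Z * Wn by exact: dot_le.
have hdot2 : - dotv (ww l t) (DD l t) <= Wn * Dn.
  by apply: le_trans (dot_absle _ _); rewrite -normrN ler_norm.
have Li0 : 0 <= Le^-1 by rewrite invr_ge0 ltW.
have h1 : De l t <= 2 * Z * Wn + 2 * (a ^+ 2)^-1 * Wn * Dn.
  rewrite /De a2; nra.
have := @key_ineq _ _ _ _ _ _ _ _ a0 (etrans a2 HLe) HB0 HBA (enorm_ge0 (zz l t)) (enorm_ge0 (ww l t)) m0 hD.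
rewrite -/Z -/Wn => h2.
have ee_eq : ee l t = Z ^+ 2 + (a ^+ 2)^-1 * Wn ^+ 2 by rewrite /ee /tnorm2 !enorm_sq a2.
have hm : m ^+ 2 <= EE t / N%:R.
  have cs : S ^+ 2 <= (\sum_(j < N) sqnorm (zz j t)) * N%:R.
    have := @cauchy_schwarz _ N (fun j => enorm (zz j t)) (fun _ => 1).
    have e1 : \sum_(j < N) enorm (zz j t) * 1 = S by apply: eq_bigr => j _; rewrite mulr1.
    have e2 : \sum_(j < N) enorm (zz j t) ^+ 2 = \sum_(j < N) sqnorm (zz j t).
      by apply: eq_bigr => j _; rewrite enorm_sq.
    have e3 : \sum_(j < N) (1 : R) ^+ 2 = N%:R by rewrite expr1n sumr_const card_ord.
    by rewrite e1 e2 e3.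
  have hs : \sum_(j < N) sqnorm (zz j t) <= EE t.
    by apply: ler_sum => j _; rewrite /ee /tnorm2 lerDl mulr_ge0 ?sqnorm_ge0.
  rewrite /m expr_div_n ler_pdivrMr ?exprn_gt0 //.
  apply: le_trans cs _.
  rewrite expr2 mulrA divfK ?gt_eqF //.
  by rewrite ler_pM2r.
have EE0 : 0 <= EE t by apply: sumr_ge0 => j _; exact: ee_ge0.
have hfin : a / 2 * m ^+ 2 <= a / (2 * N%:R) * EE t.
  have -> : a / (2 * N%:R) * EE t = a / 2 * (EE t / N%:R).
    by field; rewrite gt_eqF.
  by apply: ler_wpM2l => //; rewrite divr_ge0 // ltW.
rewrite ee_eq; lra.
Qed.



Lemma EE_deriv (t : R) : is_derive t 1 EE (\sum_(l < N) De l t).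
Proof. by apply: derSum => l; exact: ee_deriv. Qed.

Lemma EE_ge0 (t : R) : 0 <= EE t.
Proof. by apply: sumr_ge0 => j _; exact: ee_ge0. Qed.

Lemma sumDe_bound (t : R) :
  \sum_(l < N) De l t <= 5 / 2 * Num.sqrt Le * EE t.
Proof.
set a := Num.sqrt Le.
have a0 : 0 < a by rewrite sqrtr_gt0.
apply: le_trans (ler_sum _ (fun l _ => De_bound l t)) _.
rewrite big_split /= -mulr_sumr -/(EE t) sumr_const card_ord -[X in _ + X]mulr_natr -/a.
have E0 := EE_ge0 t.
have hN : a / (2 * N%:R) * EE t * N%:R <= a / 2 * EE t.
  case: N => [|n]; first by rewrite mulr0 mulr_ge0 // divr_ge0 // ltW.
  have n0 : (n.+1%:R : R) != 0 by rewrite pnatr_eq0.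
  by rewrite le_eqVlt; apply/orP; left; apply/eqP; field.
lra.
Qed.

Lemma EE_bound (s : R) : 0 <= s ->
  EE s <= expR (5 / 2 * Num.sqrt Le * s) * EE 0.
Proof.
move=> s0.
set c := 5 / 2 * Num.sqrt Le.
pose f t := expR ((- c) * t) * EE t.
have hf : forall t : R, is_derive t 1 f
    (expR ((- c) * t) * (\sum_(l < N) De l t) + EE t * ((- c) * expR ((- c) * t))).
  by move=> t; apply: derM; [exact: derExp | exact: EE_deriv].
have hn : forall t : R, 0 < t ->
    expR ((- c) * t) * (\sum_(l < N) De l t) + EE t * ((- c) * expR ((- c) * t)) <= 0.
  move=> t _; have := sumDe_bound t; rewrite -/c => hb.
  have ep := expR_gt0 ((- c) * t).
  have -> : expR (- c * t) * (\sum_(l < N) De l t) + EE t * (- c * expR (- c * t))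
     = expR (- c * t) * ((\sum_(l < N) De l t) - c * EE t) by ring.
  by rewrite pmulr_rle0 // subr_le0.
have := @nonincr _ f _ hf hn s s0.
rewrite /f mulr0 expR0 mul1r => H.
have -> : EE s = expR (c * s) * (expR (- c * s) * EE s).
  by rewrite mulrA -expRD mulNr addrN expR0 mul1r.
by rewrite ler_pM2l ?expR_gt0.
Qed.


Lemma ee_bound (l : 'I_N) (s : R) : 0 <= s ->
  ee l s <= expR (2 * Num.sqrt Le * s) *
     (ee l 0 + (expR (Num.sqrt Le / 2 * s) - 1) * (EE 0 / N%:R)).
Proof.
move=> s0.
set a := Num.sqrt Le.
have a0 : 0 < a by rewrite sqrtr_gt0.
have N0 : (0 < N)%N by apply: leq_ltn_trans (ltn_ord l).
have NR : (N%:R : R) != 0 by rewrite pnatr_eq0 -lt0n.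
set K := EE 0 / N%:R.
pose g t := expR ((- (2 * a)) * t) * ee l t - K * expR (a / 2 * t).
have hg : forall t : R, is_derive t 1 g
    ((expR ((- (2 * a)) * t) * De l t + ee l t * ((- (2 * a)) * expR ((- (2 * a)) * t)))
      - K * (a / 2 * expR (a / 2 * t))).
  move=> t; apply: derB; first by apply: derM; [exact: derExp | exact: ee_deriv].
  by apply: derCM; exact: derExp.
have hn : forall t : R, 0 < t ->
    (expR ((- (2 * a)) * t) * De l t + ee l t * ((- (2 * a)) * expR ((- (2 * a)) * t)))
      - K * (a / 2 * expR (a / 2 * t)) <= 0.
  move=> t t0.
  have h1 := De_bound l t; rewrite -/a in h1.
  have h2 := EE_bound t (ltW t0); rewrite -/a in h2.
  have ep := expR_gt0 ((- (2 * a)) * t).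
  have E1 : expR ((- (2 * a)) * t) * expR (5 / 2 * a * t) = expR (a / 2 * t).
    by rewrite -expRD; congr expR; field.
  have h3 : expR ((- (2 * a)) * t) * (De l t - 2 * a * ee l t) <=
       expR ((- (2 * a)) * t) * (a / (2 * N%:R) * (expR (5 / 2 * a * t) * EE 0)).
    rewrite ler_pM2l //; apply: le_trans (_ : _ <= a / (2 * N%:R) * EE t) _.
      by lra.
    by apply: ler_wpM2l => //; rewrite divr_ge0 ?mulr_ge0 ?ler0n // ltW.
  have E2 : expR ((- (2 * a)) * t) * (a / (2 * N%:R) * (expR (5 / 2 * a * t) * EE 0))
      = K * (a / 2 * expR (a / 2 * t)).
    by rewrite -E1 /K; field.
  rewrite E2 in h3.
  have -> : expR (- (2 * a) * t) * De l t + ee l t * (- (2 * a) * expR (- (2 * a) * t))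
     = expR ((- (2 * a)) * t) * (De l t - 2 * a * ee l t) by ring.
  lra.
have := @nonincr _ g _ hg hn s s0.
rewrite /g !mulr0 expR0 mul1r mulr1 => H.
have -> : ee l s = expR (2 * a * s) * (expR (- (2 * a) * s) * ee l s).
  by rewrite mulrA -expRD mulNr addrN expR0 mul1r.
rewrite ler_pM2l ?expR_gt0 //.
lra.
Qed.

End Flow.
Lemma exp_bound (R : realType) (x : R) : 0 <= x -> x <= 3^-1 ->
  expR (5 / 2 * x) <= 1 + 7 * x.
Proof.
move=> x0 x1.
set y := 5 / 4 * x.
have e1 : expR (5 / 2 * x) = expR y * expR y.
  by rewrite -expRD /y; congr expR; field.
have hy := expR_ge1Dx (- y).
have e2 : expR (- y) * expR y = 1 by rewrite -expRD addNr expR0.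
have Ep := expR_gt0 y.
set E := expR y in e1 e2 Ep *.
have h1 : (1 - y) * E <= 1.
  rewrite -e2 ler_pM2r //; lra.
have y1 : y <= 5 / 12 by rewrite /y; lra.
have h2 : 1 <= (1 + 7 * x) * (1 - y) ^+ 2.
  rewrite /y; nra.
have h3 : ((1 - y) * E) ^+ 2 <= 1.
  have : 0 <= (1 - y) * E by rewrite mulr_ge0 // ?ltW //; lra.
  nra.
rewrite e1; nra.
Qed.

Theorem mainTheorem13 (R : realType) (N d : nat) (eps L Lt h : R)
  (V : 'rV[R]_d -> R) (W : 'rV[R]_d -> 'rV[R]_d -> R) :
  0 <= eps -> 0 < L -> 0 <= Lt ->
  (* C^1 regularity *)
  (forall x, differentiable V x) ->
  (forall z : 'rV[R]_d * 'rV[R]_d,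
      differentiable (fun w : 'rV[R]_d * 'rV[R]_d => W w.1 w.2) z) ->
  (* (a) *)
  V 0 = 0 -> (forall x, 0 <= V x) ->
  (* (b) *)
  (forall x y, enorm (grad V x - grad V y) <= L * enorm (x - y)) ->
  (* (d) *)
  (forall x y, W x y = W y x) ->
  (forall x y xt yt, enorm (grad1 W x y - grad1 W xt yt)
                      <= Lt * (enorm (x - xt) + enorm (y - yt))) ->
  let Le := L + 2 * eps * Lt in
  0 < h -> Le * h ^+ 2 <= 9^-1 ->
  forall (x v y u : 'M[R]_(N, d)) (q1 p1 q2 p2 : R -> 'M[R]_(N, d)),
  is_flow (Upot eps V W) x v q1 p1 ->
  is_flow (Upot eps V W) y u q2 p2 ->
  \sum_(l < N)
     sup [set tnorm2 Le (row l (q1 s) - row l (q2 s))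
                        (row l (p1 s) - row l (p2 s))
          | s in [set s : R | 0 <= s <= h]]
  <= (1 + 7 * Num.sqrt Le * h) *
     \sum_(l < N) tnorm2 Le (row l x - row l y) (row l v - row l u).
Proof.
move=> e0 L0 Lt0 dV dW V0 Vpos lV sW lW Le h0 hLe x v y u q1 p1 q2 p2
  [q10 [p10 [Hq1 Hp1]]] [q20 [p20 [Hq2 Hp2]]].
set A := L + eps * Lt; set B := eps * Lt.
have HLe : Le = A + B by rewrite /Le /A /B; ring.
have HB0 : 0 <= B by rewrite /B mulr_ge0.
have HBA : B <= A by rewrite /A /B; lra.
have HLe0 : 0 < Le by rewrite /Le; have := mulr_ge0 e0 Lt0; lra.
have HG := @gradU_lip _ N d eps L Lt V W e0 Lt0 dV dW sW lV lW.
set G := gradU (Upot eps V W) in Hp1 Hp2 HG.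
set a := Num.sqrt Le.
have a0 : 0 < a by rewrite sqrtr_gt0.
have ah : a * h <= 3^-1.
  have : (a * h) ^+ 2 <= 9^-1 by rewrite exprMn sqr_sqrtr // ltW.
  have ah0 : 0 <= a * h by rewrite mulr_ge0 ?ltW.
  nra.
set E0 := EE Le q1 p1 q2 p2 0.
have RHS : \sum_(l < N) tnorm2 Le (row l x - row l y) (row l v - row l u) = E0.
  by rewrite /E0 /EE /ee q10 q20 p10 p20.
rewrite RHS.
have E00 : 0 <= E0 by exact: EE_ge0.
have step : forall l : 'I_N,
  sup [set tnorm2 Le (row l (q1 s) - row l (q2 s)) (row l (p1 s) - row l (p2 s))
          | s in [set s : R | 0 <= s <= h]]
  <= expR (2 * a * h) * (ee Le q1 p1 q2 p2 l 0 + (expR (a / 2 * h) - 1) * (E0 / N%:R)).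
  move=> l; apply: ge_sup.
    by exists (ee Le q1 p1 q2 p2 l 0); exists 0 => //=; rewrite lexx ltW.
  move=> z [s /andP [s0 sh] <-].
  have := @ee_bound _ N d Le A B G q1 p1 q2 p2 HLe HB0 HBA HLe0 Hq1 Hq2 Hp1 Hp2 HG l s s0.
  rewrite -/a -/E0 => hb; apply: le_trans hb _.
  have N0 : (0 < N)%N by apply: leq_ltn_trans (ltn_ord l).
  have K0 : 0 <= E0 / N%:R by rewrite divr_ge0 ?ler0n.
  have el0 := @ee_ge0 _ N d Le q1 p1 q2 p2 HLe0 l 0.
  apply: ler_pM.
  - exact: ltW (expR_gt0 _).
  - rewrite addr_ge0 // mulr_ge0 // subr_ge0 -expR0 ler_expR mulr_ge0 //.
    by rewrite divr_ge0 ?ltW.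
  - by rewrite ler_expR ler_pM2l // mulr_gt0.
  - rewrite lerD2l ler_wpM2r // lerB // ler_expR ler_wpM2l //.
    by rewrite divr_ge0 ?ltW.
apply: le_trans (ler_sum _ (fun l _ => step l)) _.
rewrite -mulr_sumr big_split /= -/(EE Le q1 p1 q2 p2 0) -/E0 sumr_const card_ord.
have ex0 : 0 <= expR (a / 2 * h) - 1.
  by rewrite subr_ge0 -expR0 ler_expR mulr_ge0 // ?divr_ge0 ?ltW.
have hsum : (expR (a / 2 * h) - 1) * (E0 / N%:R) *+ N <= (expR (a / 2 * h) - 1) * E0.
  have [->|Nn] := eqVneq N 0%N; first by rewrite mulr0n mulr_ge0.
  have NR : (N%:R : R) != 0 by rewrite pnatr_eq0.
  by rewrite -mulr_natr le_eqVlt; apply/orP; left; apply/eqP; field.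
apply: le_trans (_ : _ <= expR (2 * a * h) * (E0 + (expR (a / 2 * h) - 1) * E0)) _.
  by rewrite ler_pM2l ?expR_gt0 // lerD2l.
have -> : expR (2 * a * h) * (E0 + (expR (a / 2 * h) - 1) * E0) = expR (5 / 2 * (a * h)) * E0.
  have -> : 5 / 2 * (a * h) = 2 * a * h + a / 2 * h by field.
  by rewrite expRD; ring.
rewrite -[7 * a * h]mulrA; apply: ler_wpM2r => //.
apply: exp_bound => //; exact: mulr_ge0 (ltW a0) (ltW h0).
Qed.
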